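(* Let $\Gamma$ be a group, $\alpha\in\mathrm{Aut}(\Gamma)$ and $\omega:\Gamma\times\Gamma\to\Gamma$, $\omega(g,h)=\alpha(g)$. Consider the action $\rho$ of $V$ on $\prod_{\mathbb Q_2}\Gamma$ given by $$\rho(v)(a)(x)=\alpha^{-\log_2(v'(v^{-1}x))}\big(a(v^{-1}x)\big),\quad a:\mathbb Q_2\to\Gamma,\ v\in V,\ x\in\mathbb Q_2.$$ Then $G(\omega)$ is isomorphic to the (unrestricted twisted permutational wreath product) $\prod_{\mathbb Q_2}\Gamma\rtimes_\rho V$.
   Context: $\{0,1\}^*$ denotes the finite words over $\{0,1\}$ (including the empty word), $|u|$ the length; $\mathfrak C=\{0,1\}^{\mathbb N}$; $\mathbb Q_2\subset\mathfrak C$ is the set of eventually-zero sequences; $\prod_{\mathbb Q_2}\Gamma$ is the group of all maps $\mathbb Q_2\to\Gamma$ under pointwise product. A finite complete prefix code is a finite set $\{t_1,\dots,t_n\}\subset\{0,1\}^*$ such that every $x\in\mathfrak C$ has exactly one $t_i$ as prefix. Thompson's group $V$ is the group of homeomorphisms $v$ of $\mathfrak C$ for which there exist finite complete prefix codes $\{t_i\},\{s_i\}$ and a permutation $\sigma$ with $v(t_iw)=s_{\sigma(i)}w$ for all $i$, $w\in\mathfrak C$ ($V$ preserves $\mathbb Q_2$); for $y\in\mathfrak C$ with prefix $t_i$, $v'(y):=2^{|t_i|-|s_{\sigma(i)}|}$. $K(\omega)$ is the group of maps $a:\{0,1\}^*\to\Gamma$ with $a(u)=\omega(a(u0),a(u1))$;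 $V$ acts on it by $\pi(v)(a)(s_{\sigma(i)}u)=a(t_iu)$ for all $i$, $u\in\{0,1\}^*$ (determining $\pi(v)(a)\in K(\omega)$ uniquely); $G(\omega):=K(\omega)\rtimes V$ with $vav^{-1}=\pi(v)(a)$. *)

(* Defs.v *)
From Stdlib Require Import ClassicalEpsilon.
From mathcomp Require Import all_boot all_order all_algebra all_fingroup.
Set Implicit Arguments. Unset Strict Implicit. Unset Printing Implicit Defensive.
Import GRing.Theory Num.Theory.

Record grp := Grp {
  carrier :> Type;
  Gmul : carrier -> carrier -> carrier;
  Gone : carrier;
  Ginv : carrier -> carrier;
  GmulA : forall x y z, Gmul x (Gmul y z) = Gmul (Gmul x y) z;
  Gmul1 : forall x, Gmul Gone x = x;
  GmulV : forall x, Gmul (Ginv x) x = Gone }.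

Definition finv (A : Type) (f : A -> A) (x : A) : A :=
  epsilon (inhabits x) (fun y => f y = x).

Definition apow (A : Type) (f : A -> A) (k : int) : A -> A :=
  match k with
  | Posz n => iter n f
  | Negz n => iter n.+1 (finv f)
  end.

Definition cantor := nat -> bool.

Definition catw (u : seq bool) (w : cantor) : cantor :=
  fun n => if n < size u then nth false u n else w (n - size u).

Definition is_prefix (u : seq bool) (x : cantor) : Prop :=
  forall n, n < size u -> x n = nth false u n.

Definition complete_prefix_code (n : nat) (t : 'I_n -> seq bool) : Prop :=
  forall x : cantor, exists! i, is_prefix (t i) x.

Definition V_rep (v : cantor -> cantor) (n : nat) (t s : 'I_n -> seq bool)
  (sigma : {perm 'I_n}) : Prop :=
  [/\ complete_prefix_code t, complete_prefix_code s &
      forall i w, v (catw (t i) w) = catw (s (sigma i)) w].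

Definition isV (v : cantor -> cantor) : Prop :=
  exists n (t s : 'I_n -> seq bool) (sigma : {perm 'I_n}), V_rep v t s sigma.

Definition Vt := {v : cantor -> cantor | isV v}.

Definition mulV (v w : Vt) : Vt :=
  epsilon (inhabits v) (fun u : Vt => sval u = sval v \o sval w).

(* log_2 v'(y) = |t_i| - |s_sigma(i)| for a representation of v with t_i prefix of y *)
Definition vlog (v : Vt) (y : cantor) : int :=
  epsilon (inhabits 0%R) (fun k : int =>
    exists n (t s : 'I_n -> seq bool) (sigma : {perm 'I_n}),
      V_rep (sval v) t s sigma /\
      exists i, is_prefix (t i) y /\
        k = ((size (t i))%:Z - (size (s (sigma i)))%:Z)%R).

(* ---------- Q_2 : eventually-zero sequences ---------- *)
Definition inQ2 (x : cantor) : Prop := exists N, forall n, N <= n -> x n = false.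
Definition Q2t := {x : cantor | inQ2 x}.

Definition vinvQ (v : Vt) (x : Q2t) : Q2t :=
  epsilon (inhabits x) (fun y : Q2t => sval v (sval y) = sval x).

Section Wreath.
Variables (Gam : grp) (alpha : Gam -> Gam).

Definition rho (v : Vt) (a : Q2t -> Gam) : Q2t -> Gam :=
  fun x => apow alpha (- vlog v (sval (vinvQ v x)))%R (a (vinvQ v x)).

Definition WR := ((Q2t -> Gam) * Vt)%type.

Definition mulW (p q : WR) : WR :=
  (fun x => Gmul (p.1 x) (rho p.2 q.1 x), mulV p.2 q.2).

Definition omega (g h : Gam) : Gam := alpha g.

Definition inK (a : seq bool -> Gam) : Prop :=
  forall u, a u = omega (a (rcons u false)) (a (rcons u true)).

Definition Kt := {a : seq bool -> Gam | inK a}.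

Definition mulK (a b : Kt) : Kt :=
  epsilon (inhabits a) (fun c : Kt => sval c = fun u => Gmul (sval a u) (sval b u)).

Definition piK (v : Vt) (a : Kt) : Kt :=
  epsilon (inhabits a) (fun b : Kt =>
    exists n (t s : 'I_n -> seq bool) (sigma : {perm 'I_n}),
      V_rep (sval v) t s sigma /\
      forall i u, sval b (s (sigma i) ++ u) = sval a (t i ++ u)).

Definition GW := (Kt * Vt)%type.

(* (a,v)(b,w) = (a . pi(v)(b), v w), i.e. v a v^{-1} = pi(v)(a) *)
Definition mulG (p q : GW) : GW := (mulK p.1 (piK p.2 q.1), mulV p.2 q.2).

End Wreath.

(* Main.v *)
Require Import Defs.
From mathcomp Require Import all_boot all_order all_algebra all_fingroup.
From mathcomp Require Import zify.
From Stdlib Require Import ClassicalEpsilon FunctionalExtensionality ProofIrrelevance.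
Set Implicit Arguments. Unset Strict Implicit. Unset Printing Implicit Defensive.

Lemma sig_eqP (A : Type) (P : A -> Prop) (x y : {a | P a}) :
  sval x = sval y -> x = y.
Proof.
case: x => x px; case: y => y py /= E; subst y; f_equal; apply: proof_irrelevance.
Qed.

Definition zero : cantor := fun _ => false.

Lemma inQ2_catw (u : seq bool) : inQ2 (catw u zero).
Proof. exists (size u) => n Hn; rewrite /catw ltnNge Hn. by []. Qed.

Definition q2of (u : seq bool) : Q2t := exist _ (catw u zero) (inQ2_catw u).

Lemma catw_cat p q w : catw (p ++ q) w = catw p (catw q w).
Proof.
apply: functional_extensionality => n; rewrite /catw size_cat nth_cat.
case: (ltnP n (size p)) => H1; first by rewrite ltn_addr.
have -> : (n < size p + size q) = (n - size p < size q) by lia.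
by case: ifP => //; rewrite subnDA.
Qed.

Lemma prefix_catw p w : is_prefix p (catw p w).
Proof. by move=> n Hn; rewrite /catw Hn. Qed.

Lemma prefix_decomp p y : is_prefix p y -> y = catw p (fun n => y (n + size p)).
Proof.
move=> H; apply: functional_extensionality => n; rewrite /catw.
case: ifP => Hn; first by rewrite H.
by rewrite subnK // leqNgt Hn.
Qed.

Lemma catw_inj p w1 w2 : catw p w1 = catw p w2 -> w1 = w2.
Proof.
move=> E; apply: functional_extensionality => n.
have := f_equal (fun h => h (n + size p)) E; rewrite /catw.
have -> : (n + size p < size p) = false by lia.
by rewrite addnK.
Qed.

Lemma catw_size_lt q1 q2 : size q1 < size q2 -> ~ (forall w, catw q1 w = catw q2 w).
Proof.
move=> Hl E.
have := f_equal (fun h => h (size q1)) (E (fun _ => ~~ nth false q2 (size q1))).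
rewrite /catw ltnn Hl; by case: (nth false q2 (size q1)).
Qed.

Lemma catw_size q1 q2 : (forall w, catw q1 w = catw q2 w) -> size q1 = size q2.
Proof.
move=> E; case: (ltngtP (size q1) (size q2)) => // H.
- by case: (catw_size_lt H E).
- by case: (@catw_size_lt q2 q1 H) => w; rewrite E.
Qed.

Lemma mkseq_catw q z : mkseq (catw q z) (size q) = q.
Proof.
apply: (@eq_from_nth _ false); first by rewrite size_mkseq.
by move=> i; rewrite size_mkseq => Hi; rewrite nth_mkseq // /catw Hi.
Qed.

Lemma code_ex n (t : 'I_n -> seq bool) y : complete_prefix_code t -> exists i, is_prefix (t i) y.
Proof. by move=> /(_ y) [i [Hi _]]; exists i. Qed.

Lemma Vrep_inj f n (t s : 'I_n -> seq bool) sg : V_rep f t s sg -> injective f.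
Proof.
case=> Ct Cs Hf y1 y2 E.
have [i Hi] := code_ex y1 Ct; have [k Hk] := code_ex y2 Ct.
move: E; rewrite (prefix_decomp Hi) (prefix_decomp Hk) !Hf => E.
have Hik : sg i = sg k.
  set w1 := (fun n0 => y1 (n0 + size (t i))) in E *.
  set w2 := (fun n0 => y2 (n0 + size (t k))) in E *.
  have [j [_ Hj]] := Cs (catw (s (sg i)) w1).
  have P1 : is_prefix (s (sg i)) (catw (s (sg i)) w1) := @prefix_catw _ _.
  have P2 : is_prefix (s (sg k)) (catw (s (sg i)) w1).
    rewrite E; exact: @prefix_catw.
  by rewrite -(Hj _ P1) -(Hj _ P2).
have ik : i = k by apply: (perm_inj Hik).
subst k; by move: E => /catw_inj ->.
Qed.

Lemma deriv_unique_aux f n (t s : 'I_n -> seq bool) sg n' (t' s' : 'I_n' -> seq bool) sg' i i' y :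
  V_rep f t s sg -> V_rep f t' s' sg' -> is_prefix (t i) y -> is_prefix (t' i') y ->
  size (t i) <= size (t' i') ->
  ((size (t i))%:Z - (size (s (sg i)))%:Z = (size (t' i'))%:Z - (size (s' (sg' i')))%:Z)%R.
Proof.
case=> _ _ Hf; case=> _ _ Hf' Hp Hp' Hle.
set p := t i in Hp Hle *; set p' := t' i' in Hp' Hle *.
have Ep' : p' = p ++ drop (size p) p'.
  rewrite -{1}(cat_take_drop (size p) p'); congr (_ ++ _).
  apply: (@eq_from_nth _ false); first by rewrite size_take; case: ltnP => //; lia.
  move=> j; rewrite size_take => Hj.
  have Hj' : j < size p by move: Hj; case: ifP => //; lia.
  rewrite nth_take // -Hp' ?Hp //; lia.
set r := drop (size p) p' in Ep'.
have E : forall w, catw (s' (sg' i')) w = catw (s (sg i) ++ r) w.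
  move=> w; rewrite -Hf' -/p' Ep' catw_cat Hf catw_cat //.
have Hs := catw_size E.
have Hsz : size p' = size p + size r by rewrite {1}Ep' size_cat.
rewrite Hs size_cat Hsz; lia.
Qed.

Lemma deriv_unique f n (t s : 'I_n -> seq bool) sg n' (t' s' : 'I_n' -> seq bool) sg' i i' y :
  V_rep f t s sg -> V_rep f t' s' sg' -> is_prefix (t i) y -> is_prefix (t' i') y ->
  ((size (t i))%:Z - (size (s (sg i)))%:Z = (size (t' i'))%:Z - (size (s' (sg' i')))%:Z)%R.
Proof.
move=> R R' P P'; case: (leqP (size (t i)) (size (t' i'))) => H.
- exact: deriv_unique_aux R R' P P' H.
- symmetry; apply: deriv_unique_aux R' R P' P _; lia.
Qed.

Lemma vlog_rep (v : Vt) n (t s : 'I_n -> seq bool) sg i y :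
  V_rep (sval v) t s sg -> is_prefix (t i) y ->
  vlog v y = ((size (t i))%:Z - (size (s (sg i)))%:Z)%R.
Proof.
move=> R P; rewrite /vlog.
case: (epsilon_spec (inhabits 0%R) (fun k : int =>
    exists n (t s : 'I_n -> seq bool) (sigma : {perm 'I_n}),
      V_rep (sval v) t s sigma /\
      exists i, is_prefix (t i) y /\
        k = ((size (t i))%:Z - (size (s (sigma i)))%:Z)%R)).
  by exists ((size (t i))%:Z - (size (s (sg i)))%:Z)%R, n, t, s, sg; split => //; exists i.
move=> n' [t' [s' [sg' [R' [i' [P' ->]]]]]].
exact: deriv_unique R' R P' P.
Qed.

Section Grp.
Variables (Gam : grp) (alpha : Gam -> Gam).
Hypothesis am : forall x y, alpha (Gmul x y) = Gmul (alpha x) (alpha y).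
Hypothesis ab : bijective alpha.

Lemma finvK x : Defs.finv alpha (alpha x) = x.
Proof.
have E := epsilon_spec (inhabits (alpha x)) (fun y => alpha y = alpha x) (ex_intro _ x erefl).
exact: (bij_inj ab E).
Qed.

Lemma finvKV y : alpha (Defs.finv alpha y) = y.
Proof.
case: ab => g _ c2.
exact: (epsilon_spec (inhabits y) (fun z => alpha z = y) (ex_intro _ (g y) (c2 y))).
Qed.

Lemma iter_finvK n x : iter n (Defs.finv alpha) (iter n alpha x) = x.
Proof. elim: n => // n IH; by rewrite iterSr iterS finvK. Qed.

Lemma iter_finvKV n x : iter n alpha (iter n (Defs.finv alpha) x) = x.
Proof. elim: n => // n IH; by rewrite iterSr iterS finvKV. Qed.

Lemma apow_sub a b c x :
  apow alpha (a%:Z - b%:Z)%R (iter (b + c) alpha x) = iter (a + c) alpha x.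
Proof.
case: (leqP b a) => H.
  have -> : (a%:Z - b%:Z)%R = Posz (a - b) by rewrite subzn.
  have -> : a + c = (a - b) + (b + c) by lia.
  by rewrite /= -iterD.
have -> : (a%:Z - b%:Z)%R = Negz (b - a).-1.
  rewrite NegzE prednK; last lia.
  by rewrite -subzn ?GRing.opprB // ltnW.
have -> : b + c = (b - a) + (a + c) by lia.
have E : (b - a).-1.+1 = b - a by lia.
have -> : apow alpha (Negz (b - a).-1) = iter (b - a) (Defs.finv alpha).
  by apply: functional_extensionality => y; rewrite -E.

by rewrite iterD iter_finvK.
Qed.

Lemma iter_morph n x y : iter n alpha (Gmul x y) = Gmul (iter n alpha x) (iter n alpha y).
Proof. elim: n => // n IH; by rewrite !iterS IH am. Qed.

Definition tailN (x : Q2t) : nat :=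
  epsilon (inhabits 0) (fun N => forall n, N <= n -> sval x n = false).

Lemma tailN_spec x : forall n, tailN x <= n -> sval x n = false.
Proof.
rewrite /tailN; apply: (epsilon_spec (inhabits 0) (fun N => forall n, N <= n -> sval x n = false)).
exact: (svalP x).
Qed.

Definition PhiK (a : Kt alpha) (x : Q2t) : Gam :=
  iter (tailN x) alpha (sval a (mkseq (sval x) (tailN x))).

Lemma PhiK_step (a : Kt alpha) (x : cantor) M : (forall n, M <= n -> x n = false) ->
  iter M.+1 alpha (sval a (mkseq x M.+1)) = iter M alpha (sval a (mkseq x M)).
Proof.
move=> H; rewrite mkseqS H // iterSr.
have E := svalP a (mkseq x M); rewrite /omega in E.
by rewrite E.
Qed.

Lemma PhiK_gen (a : Kt alpha) (x : cantor) M k : (forall n, M <= n -> x n = false) ->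
  iter (M + k) alpha (sval a (mkseq x (M + k))) = iter M alpha (sval a (mkseq x M)).
Proof.
move=> H; elim: k => [|k IH]; first by rewrite addn0.
rewrite addnS PhiK_step // => n Hn; apply: H; lia.
Qed.

Lemma PhiK_char a x M : (forall n, M <= n -> sval x n = false) ->
  PhiK a x = iter M alpha (sval a (mkseq (sval x) M)).
Proof.
move=> H; rewrite /PhiK.
rewrite -(PhiK_gen a M (@tailN_spec x)) addnC (PhiK_gen a (tailN x) H) //.
Qed.

Lemma PhiK_q2of a u : PhiK a (q2of u) = iter (size u) alpha (sval a u).
Proof.
rewrite (PhiK_char a (M := size u)) /= ?mkseq_catw // => n Hn.
by rewrite /catw ltnNge Hn.
Qed.

Lemma mulK_val (a b : Kt alpha) : sval (mulK a b) = fun u => Gmul (sval a u) (sval b u).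
Proof.
rewrite /mulK; apply: (epsilon_spec (inhabits a)
  (fun c : Kt alpha => sval c = fun u => Gmul (sval a u) (sval b u))).
have P : inK alpha (fun u => Gmul (sval a u) (sval b u)).
  move=> u; have Ea := svalP a u; have Eb := svalP b u.
  rewrite /omega in Ea Eb *; by rewrite am -Ea -Eb.
by exists (exist _ _ P).
Qed.

Lemma PhiK_mul a b x : PhiK (mulK a b) x = Gmul (PhiK a x) (PhiK b x).
Proof. by rewrite /PhiK mulK_val iter_morph. Qed.

Definition Psi (f : Q2t -> Gam) (u : seq bool) : Gam :=
  iter (size u) (Defs.finv alpha) (f (q2of u)).

Lemma q2of_rcons u : q2of (rcons u false) = q2of u.
Proof.
apply: sig_eqP; apply: functional_extensionality => n /=.
rewrite /catw /zero size_rcons nth_rcons.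
case: (ltngtP n (size u)) => H //; try by case: ifP.
by rewrite ltnS ltnW.
Qed.

Lemma Psi_inK f : inK alpha (Psi f).
Proof. by move=> u; rewrite /omega /Psi size_rcons q2of_rcons iterS finvKV. Qed.

Definition PsiK f : Kt alpha := exist _ (Psi f) (Psi_inK f).

Lemma PhiPsi f : PhiK (PsiK f) = f.
Proof.
apply: functional_extensionality => x.
rewrite /PhiK /= /Psi size_mkseq iter_finvKV; congr f.
apply: sig_eqP; apply: functional_extensionality => n /=.
rewrite /catw size_mkseq; case: ifP => Hn; first by rewrite nth_mkseq.
by rewrite /zero tailN_spec // leqNgt Hn.
Qed.

Lemma PsiPhi a : PsiK (PhiK a) = a.
Proof.
apply: sig_eqP; apply: functional_extensionality => u /=.
by rewrite /Psi PhiK_q2of iter_finvK.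
Qed.

Lemma rho_rep (v : Vt) (b : Kt alpha) n (t s : 'I_n -> seq bool) sg i u :
  V_rep (sval v) t s sg ->
  rho alpha v (PhiK b) (q2of (s (sg i) ++ u)) =
  iter (size (s (sg i)) + size u) alpha (sval b (t i ++ u)).
Proof.
move=> R.
have Ev : vinvQ v (q2of (s (sg i) ++ u)) = q2of (t i ++ u).
  have Hpre : sval v (sval (q2of (t i ++ u))) = sval (q2of (s (sg i) ++ u)).
    rewrite /= !catw_cat; by case: R => _ _ ->.
  have Hy := epsilon_spec (inhabits (q2of (s (sg i) ++ u)))
     (fun y : Q2t => sval v (sval y) = sval (q2of (s (sg i) ++ u))) (ex_intro _ _ Hpre).
  rewrite /vinvQ; apply: sig_eqP; apply: (Vrep_inj R); rewrite Hy /= !catw_cat.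
  by case: R => _ _ ->.
have P : is_prefix (t i) (sval (q2of (t i ++ u))).
  rewrite /= catw_cat; exact: @prefix_catw.
rewrite /rho Ev (vlog_rep R P) PhiK_q2of size_cat GRing.opprB apow_sub //.
Qed.

Lemma PhiK_piK v b : PhiK (piK v b) = rho alpha v (PhiK b).
Proof.
apply: functional_extensionality => x.
have [n [t [s [sg R]]]] := svalP v.
have Hex : exists c : Kt alpha, exists n (t s : 'I_n -> seq bool) (sg : {perm 'I_n}),
   V_rep (sval v) t s sg /\ forall i u, sval c (s (sg i) ++ u) = sval b (t i ++ u).
  exists (PsiK (rho alpha v (PhiK b))), n, t, s, sg; split=> // i u /=.
  by rewrite /Psi (@rho_rep v b n t s sg i u R) size_cat iter_finvK.
have [n' [t' [s' [sg' [R' H]]]]] : exists n (t s : 'I_n -> seq bool) (sg : {perm 'I_n}),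
   V_rep (sval v) t s sg /\ forall i u, sval (piK v b) (s (sg i) ++ u) = sval b (t i ++ u)
   := epsilon_spec (inhabits b) _ Hex.
have [j Pj] := code_ex (sval x) (let: And3 _ C _ := R' in C).
have [N0 HN0] := svalP x.
set w := fun n => sval x (n + size (s' j)).
have Ex : x = q2of (s' j ++ mkseq w N0).
  apply: sig_eqP; rewrite /= catw_cat {1}(prefix_decomp Pj); congr catw.
  apply: functional_extensionality => m; rewrite /catw size_mkseq.
  case: ifP => Hm; first by rewrite nth_mkseq.
  rewrite /zero /w; apply: HN0; move: Hm => /negbT; rewrite -leqNgt; lia.
rewrite Ex; set i := (sg'^-1)%g j.
have Ej : sg' i = j by rewrite /i permKV.
by rewrite -Ej PhiK_q2of H (@rho_rep v b n' t' s' sg' i _ R') size_cat.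
Qed.

End Grp.

Theorem mainTheorem8 (Gam : grp) (alpha : Gam -> Gam)
  (alpha_morph : forall x y, alpha (Gmul x y) = Gmul (alpha x) (alpha y))
  (alpha_bij : bijective alpha) :
  exists Phi : GW alpha -> WR Gam,
    bijective Phi /\
    forall p q, Phi (mulG p q) = mulW alpha (Phi p) (Phi q).
Proof.
exists (fun p => (PhiK p.1, p.2)); split.
  exists (fun q => (PsiK alpha_bij q.1, q.2)); case=> a v /=.
    by rewrite PsiPhi.
  by rewrite PhiPsi.
case=> a v [b w]; rewrite /mulG /mulW /=; congr pair.
apply: functional_extensionality => x.
by rewrite PhiK_mul // PhiK_piK.
Qed.
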